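(* Let $\lambda=(\lambda_1,\dots,\lambda_n)\in\mathbb{R}^n$ with $\lambda_1+\dots+\lambda_n>0$, let $\delta=\delta(\lambda)$, and let $J\subset\{1,\dots,n\}$ with $s_J(\lambda)/|J|=\delta$ and $|J|=N(\lambda)$. Define $\lambda'\in\mathbb{R}^n$ by $\lambda'_i=\lambda_i$ if $i\notin J$ and $\lambda'_i=\lambda_i-\delta$ if $i\in J$. Let $\mathcal{P}'_{ord}(n)$ be the set of $P=(I_1,\dots,I_k)\in\mathcal{P}_{ord}(n)$ for which some $r\in\{1,\dots,k\}$ satisfies $J=I_1\cup\dots\cup I_r$, and $\mathcal{P}'(n)$ its image in $\mathcal{P}(n)$. Then: (i) For every $K\subset\{1,\dots,n\}$ with $K\neq J$, $s_K(\lambda')>0$ if and only if $s_K(\lambda)>0$. (ii) $\mathcal{P}_{ord}(\lambda)=\mathcal{P}_{ord}(\lambda')\sqcup(\mathcal{P}'_{ord}(n)\cap\mathcal{P}_{ord}(\lambda))$ and $\mathcal{P}(\lambda)=\mathcal{P}(\lambda')\sqcup(\mathcal{P}'(n)\cap\mathcal{P}(\lambda))$; in particular $|\mathcal{P}_{ord}(\lambda')|<|\mathcal{P}_{ord}(\lambda)|$ and $|\mathcal{P}(\lambda')|<|\mathcal{P}(\lambda)|$. Let $m=|J|$, write $J=\{i_1<\dots<i_m\}$ and $K:=\{1,\dots,n\}\setminus J=\{j_1<\dots<j_{n-m}\}$, $u_J:J\to\{1,\dots,m\}$, $i_r\mapsto r$, $u_K:K\to\{1,\dots,n-m\}$, $j_r\mapsto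 r$; let $\sigma\in\mathfrak{S}_n$ with $\sigma(i_r)=r$ and $\sigma(j_r)=m+r$, and $\varepsilon_0=\mathrm{sgn}(\sigma)$. Define $\varphi_{ord}:\mathcal{P}'_{ord}(n)\to\mathcal{P}_{ord}(m)\times\mathcal{P}_{ord}(n-m)$ by $\varphi_{ord}(I_1,\dots,I_k)=((u_J(I_1),\dots,u_J(I_r)),(u_K(I_{r+1}),\dots,u_K(I_k)))$ where $I_1\cup\dots\cup I_r=J$, and similarly $\varphi:\mathcal{P}'(n)\to\mathcal{P}(m)\times\mathcal{P}(n-m)$. Let $\mu=(\lambda_{i_1},\dots,\lambda_{i_m})\in\mathbb{R}^m$ and $\nu=(\lambda_{j_1},\dots,\lambda_{j_{n-m}})\in\mathbb{R}^{n-m}$. Then: (iii) For every $P\in\mathcal{P}'_{ord}(n)$, if $\varphi_{ord}(P)=(P_1,P_2)$ then $\varepsilon(P)=\varepsilon_0\varepsilon(P_1)\varepsilon(P_2)$ and $\varepsilon'(P)=\varepsilon'(P_1)\varepsilon'(P_2)$. (iv) $\varphi_{ord}$ induces a bijection $\mathcal{P}'_{ord}(n)\cap\mathcal{P}_{ord}(\lambda)\to\mathcal{P}_{ord}(\mu)\times\mathcal{P}_{ord}(\nu)$, and $\varphi$ induces a bijection $\mathcal{P}'(n)\cap\mathcal{P}(\lambda)\to\mathcal{P}(\mu)\times\mathcal{P}(\nu)$.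
   Context: $s_J(\lambda)=\sum_{i\in J}\lambda_i$. $\delta(\lambda)$ is the minimum of $s_J(\lambda)/|J|$ over subsets $J$ with $s_J(\lambda)>0$; $N(\lambda)$ is the minimum of $|J|$ over subsets $J$ with $s_J(\lambda)/|J|=\delta(\lambda)$. $\mathcal{P}(n)$ (resp. $\mathcal{P}_{ord}(n)$) is the set of partitions (resp. ordered partitions) of $\{1,\dots,n\}$ into nonempty blocks. For $\lambda\in\mathbb{R}^n$: $\mathcal{P}_{ord}(\lambda)$ is the set of $(I_1,\dots,I_k)$ with $s_{I_1}(\lambda)+\dots+s_{I_i}(\lambda)>0$ for all $i$, and $\mathcal{P}(\lambda)$ the set of partitions all of whose blocks have $s_{I_\alpha}(\lambda)>0$. For $P=(I_1,\dots,I_k)$ with $n_i=|I_i|$, $\varepsilon(P)=\mathrm{sgn}(\sigma_P)$ with $\sigma_P$ the unique permutation such that $\sigma_P^{-1}$ maps $\{n_1+\dots+n_i+1,\dots,n_1+\dots+n_{i+1}\}$ increasingly onto $I_{i+1}$; $\varepsilon'(P)=(-1)^{\frac12\sum_i|I_i|(|I_i|-1)}$. *)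

(* Defs.v *)
(* Indices {1,...,n} are represented by 'I_n = {0,...,n-1}. *)
From mathcomp Require Import all_boot all_order all_algebra all_fingroup.
Set Implicit Arguments. Unset Strict Implicit. Unset Printing Implicit Defensive.
Import Order.TTheory GRing.Theory Num.Theory.
Local Open Scope ring_scope.

Definition sJ (R : numDomainType) (n : nat) (J : {set 'I_n}) (lam : 'I_n -> R) : R :=
  \sum_(i in J) lam i.

Definition avg (R : numFieldType) n (J : {set 'I_n}) (lam : 'I_n -> R) : R :=
  sJ J lam / #|J|%:R.

Definition is_delta (R : numFieldType) n (lam : 'I_n -> R) (d : R) : Prop :=
  (exists J : {set 'I_n}, 0 < sJ J lam /\ avg J lam = d) /\
  (forall J : {set 'I_n}, 0 < sJ J lam -> d <= avg J lam).

Definition ordpart n (s : seq {set 'I_n}) : bool :=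
  all (fun I => I != set0) s &&
  pairwise (fun I1 I2 : {set 'I_n} => [disjoint I1 & I2]) s &&
  (\bigcup_(I <- s) (I : {set 'I_n}) == [set: 'I_n]).

Definition ordpart_lam (R : numDomainType) n (lam : 'I_n -> R)
    (s : seq {set 'I_n}) : bool :=
  ordpart s && all (fun i => 0 < \sum_(I <- take i s) sJ I lam) (iota 1 (size s)).

Definition ordpart' n (J : {set 'I_n}) (s : seq {set 'I_n}) : bool :=
  ordpart s && has (fun r => \bigcup_(I <- take r s) (I : {set 'I_n}) == J) (iota 1 (size s)).

(* finite type containing all ordered partitions of 'I_n (they have at most n
   blocks): a length k <= n and a k-tuple of subsets *)
Definition OP n := {k : 'I_n.+1 & k.-tuple {set 'I_n}}.
Definition blocks n (P : OP n) : seq {set 'I_n} := tagged P.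

Definition PordS (R : numDomainType) n (lam : 'I_n -> R) : {set OP n} :=
  [set P : OP n | ordpart_lam lam (blocks P)].
Definition Pord'S n (J : {set 'I_n}) : {set OP n} :=
  [set P : OP n | ordpart' J (blocks P)].

Definition part_lam (R : numDomainType) n (lam : 'I_n -> R)
    (P : {set {set 'I_n}}) : bool :=
  partition P [set: 'I_n] && [forall I in P, 0 < sJ I lam].
Definition PS (R : numDomainType) n (lam : 'I_n -> R) : {set {set {set 'I_n}}} :=
  [set P | part_lam lam P].
Definition P'S n (J : {set 'I_n}) : {set {set {set 'I_n}}} :=
  [set [set:: blocks Q] | Q in Pord'S J].

Definition cutJ n (J : {set 'I_n}) (s : seq {set 'I_n}) : nat :=
  find (fun r => \bigcup_(I <- take r s) (I : {set 'I_n}) == J) (iota 0 (size s).+1).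

(* phi_ord, with u_J(I) = iJ^{-1}(I), u_K(I) = jK^{-1}(I) *)
Definition phi_ord n m m' (J : {set 'I_n}) (iJ : 'I_m -> 'I_n) (jK : 'I_m' -> 'I_n)
    (s : seq {set 'I_n}) : seq {set 'I_m} * seq {set 'I_m'} :=
  (map (fun I : {set 'I_n} => iJ @^-1: I) (take (cutJ J s) s),
   map (fun I : {set 'I_n} => jK @^-1: I) (drop (cutJ J s) s)).

Definition phi n m m' (J : {set 'I_n}) (iJ : 'I_m -> 'I_n) (jK : 'I_m' -> 'I_n)
    (P : {set {set 'I_n}}) : {set {set 'I_m}} * {set {set 'I_m'}} :=
  ((fun I : {set 'I_n} => iJ @^-1: I) @: [set I in P | I \subset J],
   (fun I : {set 'I_n} => jK @^-1: I) @: [set I in P | I \subset ~: J]).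

(* sigma_P: x in I_{b+1} of rank t in I_{b+1} (0-based) goes to
   n_1 + ... + n_b + t (0-based positions) *)
Definition blk_of n (s : seq {set 'I_n}) (x : 'I_n) : nat := find (fun I : {set 'I_n} => x \in I) s.
Definition posP n (s : seq {set 'I_n}) (x : 'I_n) : nat :=
  (\sum_(I <- take (blk_of s x) s) #|I| +
   #|[set y in nth set0 s (blk_of s x) | (y < x)%N]|)%N.
Definition sigmaP_fun n (s : seq {set 'I_n}) (x : 'I_n) : 'I_n := insubd x (posP s x).
Definition sigmaP n (s : seq {set 'I_n}) : {perm 'I_n} :=
  match injectiveP (sigmaP_fun s) with
  | ReflectT inj => perm inj
  | ReflectF _ => 1%g
  end.

Definition eps n (s : seq {set 'I_n}) : int := (-1) ^+ odd_perm (sigmaP s).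
Definition eps' n (s : seq {set 'I_n}) : int := (-1) ^+ (\sum_(I <- s) 'C(#|I|, 2))%N.

(* Main.v *)
Require Import Defs.
From mathcomp Require Import all_boot all_order all_algebra all_fingroup.
Set Implicit Arguments. Unset Strict Implicit. Unset Printing Implicit Defensive.
Import Order.TTheory GRing.Theory Num.Theory.

Section Gen.
Variable T : finType.

Lemma in_bigcup_seq (S : Type) (F : S -> {set T}) (t : seq S) x :
  (x \in \bigcup_(I <- t) F I) = has (fun I => x \in F I) t.
Proof.
elim: t => [|a t IH]; first by rewrite big_nil inE.
by rewrite big_cons inE IH.
Qed.

Lemma disj_bigcup (a : {set T}) (t : seq {set T}) :
  all (fun I : {set T} => [disjoint a & I]) t -> [disjoint a & \bigcup_(I <- t) (I : {set T})].
Proof.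
move=> H; rewrite -setI_eq0; apply/eqP/setP => x; rewrite !inE in_bigcup_seq.
apply/negbTE/negP => /andP[xa /hasP[I It xI]].
by move/allP: H => /(_ I It) /disjointFr /(_ xa); rewrite xI.
Qed.

Lemma big_bigcup_seq (R : Type) (idx : R) (op : Monoid.com_law idx)
   (f : T -> R) (t : seq {set T}) :
  pairwise (fun I1 I2 : {set T} => [disjoint I1 & I2]) t ->
  \big[op/idx]_(i in \bigcup_(I <- t) (I : {set T})) f i = \big[op/idx]_(I <- t) \big[op/idx]_(i in I) f i.
Proof.
elim: t => [|a t IH]; first by rewrite !big_nil big_set0.
rewrite /= => /andP[Ha Hp]; rewrite !big_cons -IH //.
rewrite -bigU; first by apply: eq_bigl => i; rewrite !inE.
exact: disj_bigcup.
Qed.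

Lemma card_bigcup_seq (t : seq {set T}) :
  pairwise (fun I1 I2 : {set T} => [disjoint I1 & I2]) t ->
  #|\bigcup_(I <- t) (I : {set T})| = (\sum_(I <- t) #|I|)%N.
Proof.
move=> H; rewrite -sum1_card big_bigcup_seq //.
by apply: eq_bigr => I _; rewrite sum1_card.
Qed.

End Gen.

Section OP.
Variable n : nat.
Implicit Types (s t : seq {set 'I_n}).

Definition U s i := \bigcup_(I <- take i s) (I : {set 'I_n}).
Definition disjr := (fun I1 I2 : {set 'I_n} => [disjoint I1 & I2]).

Lemma opP s : ordpart s ->
  [/\ forall I, I \in s -> I != set0, pairwise disjr s &
      \bigcup_(I <- s) (I : {set 'I_n}) = setT].
Proof. by case/andP=> /andP[/allP H1 H2] /eqP H3. Qed.

Lemma op_take s i : pairwise disjr s -> pairwise disjr (take i s).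
Proof. by apply: subseq_pairwise; apply: take_subseq. Qed.

Lemma op_size s : ordpart s -> (size s <= n)%N.
Proof.
case/opP=> H1 H2 H3.
have := card_bigcup_seq H2; rewrite H3 cardsT => Hc.
rewrite -[X in (_ <= X)%N]card_ord Hc.
rewrite -sum1_size big_seq [X in (_ <= X)%N]big_seq; apply: leq_sum => I Is.
by rewrite card_gt0; apply: H1.
Qed.

Lemma op_blk s x : ordpart s ->
  (blk_of s x < size s)%N /\ x \in nth set0 s (blk_of s x).
Proof.
case/opP=> _ _ H3.
have : x \in \bigcup_(I <- s) (I : {set 'I_n}) by rewrite H3 inE.
rewrite in_bigcup_seq => hx; split; first by rewrite /blk_of -has_find.
exact: (nth_find set0 hx).
Qed.

Lemma U_neq s i j : ordpart s -> (i < j)%N -> (j <= size s)%N -> U s i != U s j.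
Proof.
case/opP=> H1 H2 _ ij js.
have is_ : (i < size s)%N by apply: leq_trans js.
have /set0Pn[x xI] : nth set0 s i != set0 by apply/H1/mem_nth.
apply/negP => /eqP/setP/(_ x); rewrite /U !in_bigcup_seq.
have -> : has (fun I : {set 'I_n} => x \in I) (take j s).
  apply/hasP; exists (nth set0 s i) => //.
  by rewrite -(nth_take set0 ij); apply: mem_nth; rewrite size_takel // ltnW.
move=> /hasP [I /(nthP set0) [k]].
rewrite size_takel ?(ltnW is_) // => ki; rewrite nth_take // => <- xk.
move/pairwiseP: H2 => /(_ set0 k i); rewrite !inE => /(_ (ltn_trans ki is_) is_ ki).
by move/disjointFr/(_ xk); rewrite xI.
Qed.

Lemma prefix_sum (R : numDomainType) (lam : 'I_n -> R) s i :
  pairwise disjr s -> (\sum_(I <- take i s) sJ I lam = sJ (U s i) lam)%R.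
Proof.
move=> H; rewrite /sJ /U big_bigcup_seq //; exact: op_take.
Qed.

Lemma ordpart_lamE (R : numDomainType) (lam : 'I_n -> R) s :
  ordpart_lam lam s = ordpart s && all (fun i => (0 < sJ (U s i) lam)%R) (iota 1 (size s)).
Proof.
rewrite /ordpart_lam; case Hs: (ordpart s) => //=.
case/opP: Hs => _ H2 _; apply: eq_all => i; by rewrite prefix_sum.
Qed.

End OP.

Section Delta.
Local Open Scope ring_scope.
Variables (R : realFieldType) (n : nat) (lam : 'I_n -> R) (delta : R) (J : {set 'I_n}).
Hypothesis Hd : is_delta lam delta.
Hypothesis HJ : avg J lam = delta.
Hypothesis Hmin : forall J' : {set 'I_n}, avg J' lam = delta -> (#|J| <= #|J'|)%N.
Let lam' := fun i : 'I_n => if i \in J then lam i - delta else lam i.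

Lemma sJ0 (lm : 'I_n -> R) : sJ set0 lm = 0.
Proof. by rewrite /sJ big_set0. Qed.

Lemma sJ_pos_card (K : {set 'I_n}) : 0 < sJ K lam -> (0 < #|K|)%N.
Proof. by rewrite card_gt0; apply: contraTneq => ->; rewrite sJ0 ltxx. Qed.

Lemma avg_card (K : {set 'I_n}) (lm : 'I_n -> R) : (0 < #|K|)%N -> sJ K lm = #|K|%:R * avg K lm.
Proof.
move=> h; rewrite /avg mulrC -mulrA mulVf ?mulr1 //.
by rewrite pnatr_eq0 -lt0n.
Qed.

Lemma delta_pos : 0 < delta.
Proof.
case: Hd => [[K [HK <-]]] _.
rewrite /avg divr_gt0 // ltr0n; exact: sJ_pos_card.
Qed.

Lemma J_card : (0 < #|J|)%N.
Proof.
rewrite lt0n; apply/negP => /eqP h.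
move: HJ; rewrite /avg h invr0 mulr0 => h0.
by have := delta_pos; rewrite -h0 ltxx.
Qed.

Lemma sJ_J : sJ J lam = #|J|%:R * delta.
Proof. by rewrite avg_card ?HJ //; exact: J_card. Qed.

Lemma sJ_J_pos : 0 < sJ J lam.
Proof. by rewrite sJ_J mulr_gt0 ?delta_pos // ltr0n J_card. Qed.

Lemma sJ_lam' (K : {set 'I_n}) : sJ K lam' = sJ K lam - #|K :&: J|%:R * delta.
Proof.
rewrite /sJ /lam'.
have -> : \sum_(i in K) (if i \in J then lam i - delta else lam i) =
   \sum_(i in K) (lam i - (i \in J)%:R * delta).
  by apply: eq_bigr => i _; case: (i \in J); rewrite ?mul1r ?mul0r ?subr0.
rewrite sumrB -mulr_suml; congr (_ - _ * _).
rewrite -natr_sum; congr (_%:R); rewrite -sum1_card big_mkcond /=.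
rewrite [RHS]big_mkcond /=; apply: eq_bigr => i _; rewrite inE.
by case: (i \in K); case: (i \in J).
Qed.

Lemma sJ_lam'_J : sJ J lam' = 0.
Proof. by rewrite sJ_lam' setIid sJ_J subrr. Qed.

Lemma sJ_lam'_out (K : {set 'I_n}) : K \subset ~: J -> sJ K lam' = sJ K lam.
Proof.
move=> h; rewrite sJ_lam'.
have -> : K :&: J = set0.
  apply/setP => x; rewrite !inE; apply/negP => /andP[xK xJ].
  by move/subsetP: h => /(_ x xK); rewrite inE xJ.
by rewrite cards0 mul0r subr0.
Qed.

Lemma key_i (K : {set 'I_n}) : K != J -> (0 < sJ K lam') = (0 < sJ K lam).
Proof.
move=> KJ; rewrite sJ_lam'; apply/idP/idP => h.
  apply: lt_le_trans h _; rewrite lerBlDr lerDl mulr_ge0 ?ler0n //.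
  exact: ltW delta_pos.
have Kc := sJ_pos_card h.
case: Hd => _ /(_ K h) hle.
have h2 : #|K|%:R * delta <= sJ K lam by rewrite avg_card // ler_pM2l // ltr0n.
have hKJ : (#|K :&: J| <= #|K|)%N by rewrite subset_leq_card // subsetIl.
rewrite subr_gt0; case: (boolP (K \subset J)) => sub.
  have -> : K :&: J = K by apply/setIidPl.
  rewrite lt_neqAle h2 andbT; apply/negP => /eqP e2.
  have eqK : avg K lam = delta.
    apply: (@mulfI _ (#|K|%:R)); first by rewrite pnatr_eq0 -lt0n.
    by rewrite -avg_card // e2.
  have := Hmin eqK => cJK.
  have : K == J by rewrite eqEcard sub cJK.
  by rewrite (negbTE KJ).
apply: (lt_le_trans _ h2).
rewrite ltr_pM2r ?delta_pos // ltr_nat ltn_neqAle hKJ andbT.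
apply: contra sub => /eqP e.
have : K :&: J = K by apply/eqP; rewrite eqEcard subsetIl e leqnn.
by move=> <-; rewrite subsetIr.
Qed.

Lemma sJ_split (lm : 'I_n -> R) (A B : {set 'I_n}) : [disjoint A & B] ->
  sJ (A :|: B) lm = sJ A lm + sJ B lm.
Proof. by move=> h; rewrite /sJ -bigU //; apply: eq_bigl => i; rewrite !inE. Qed.

Lemma out_pos (V : {set 'I_n}) : V \subset ~: J -> V != set0 ->
  0 < sJ (J :|: V) lam -> 0 < sJ V lam.
Proof.
move=> VJ V0 h.
have dj : [disjoint J & V].
  rewrite disjoint_sym disjoint_subset; apply: subset_trans VJ _.
  by apply/subsetP => x; rewrite !inE.
have ne : J :|: V != J.
  apply: contra V0 => /eqP e; apply/eqP/setP => x; rewrite inE.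
  apply/negP => xV; move/subsetP: VJ => /(_ x xV); rewrite inE.
  by rewrite -e inE xV orbT.
rewrite -(key_i ne) sJ_split // sJ_lam'_J add0r sJ_lam'_out // in h.
Qed.

End Delta.

Section Emb.
Variables (n k : nat) (f : 'I_k -> 'I_n).
Hypothesis fincr : forall r s : 'I_k, (r < s)%N -> (f r < f s)%N.

Lemma f_lt (a b : 'I_k) : (f a < f b)%N = (a < b)%N.
Proof.
apply/idP/idP; last exact: fincr.
move=> h; rewrite ltnNge; apply/negP; rewrite leq_eqVlt => /orP[/eqP e|h'].
  have e' : b = a by apply: val_inj.
  by move: h; rewrite e' ltnn.
by have := fincr h'; rewrite ltnNge (ltnW h).
Qed.

Lemma f_inj : injective f.
Proof.
move=> a b e; apply: val_inj; apply/eqP; case: (ltngtP a b) => // h.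
  by have := fincr h; rewrite e ltnn.
by have := fincr h; rewrite e ltnn.
Qed.

Lemma imset_preim (I : {set 'I_n}) : I \subset f @: setT -> f @: (f @^-1: I) = I.
Proof.
move=> h; apply/setP => x; apply/imsetP/idP => [[a] | xI].
  by rewrite inE => ? ->.
case/imsetP: (subsetP h x xI) => a _ e; exists a => //; by rewrite inE -e.
Qed.

Lemma preim_imset (L : {set 'I_k}) : f @^-1: (f @: L) = L.
Proof. by apply/setP => a; rewrite inE mem_imset //; apply: f_inj. Qed.

Lemma card_preim (I : {set 'I_n}) : I \subset f @: setT -> #|f @^-1: I| = #|I|.
Proof. by move=> h; rewrite -{2}(imset_preim h) card_imset //; apply: f_inj. Qed.

Lemma sJ_imset (R : numDomainType) (lam : 'I_n -> R) (L : {set 'I_k}) :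
  sJ (f @: L) lam = sJ L (fun r => lam (f r)).
Proof. by rewrite /sJ big_imset //= => a b _ _; apply: f_inj. Qed.

Lemma sJ_preim (R : numDomainType) (lam : 'I_n -> R) (I : {set 'I_n}) :
  I \subset f @: setT -> sJ (f @^-1: I) (fun r => lam (f r)) = sJ I lam.
Proof. by move=> h; rewrite -sJ_imset imset_preim. Qed.

Lemma rank_preim (I : {set 'I_n}) (a : 'I_k) : I \subset f @: setT ->
  #|[set y in I | (y < f a)%N]| = #|[set b in f @^-1: I | (b < a)%N]|.
Proof.
move=> h; rewrite -[RHS](card_imset _ f_inj); apply: eq_card => x.
rewrite !inE; apply/andP/imsetP => [[xI xa] | [b hb ->]].
  move/subsetP: h => /(_ x xI) /imsetP [b _ e]; subst x.
  by exists b => //; rewrite !inE xI -(f_lt b a).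
by move: hb; rewrite !inE f_lt => /andP[? ?].
Qed.

Lemma preim_neq0 (I : {set 'I_n}) : I \subset f @: setT -> I != set0 -> f @^-1: I != set0.
Proof.
move=> h; apply: contra => /eqP e; apply/eqP.
by rewrite -(imset_preim h) e imset0.
Qed.

Lemma imset_neq0 (L : {set 'I_k}) : L != set0 -> f @: L != set0.
Proof.
case/set0Pn => a aL; apply/set0Pn; exists (f a); exact: imset_f.
Qed.

Lemma preim_disj (I1 I2 : {set 'I_n}) : [disjoint I1 & I2] -> [disjoint f @^-1: I1 & f @^-1: I2].
Proof.
rewrite -!setI_eq0 -preimsetI => /eqP ->; by rewrite preimset0.
Qed.

Lemma imset_disj (L1 L2 : {set 'I_k}) : [disjoint L1 & L2] -> [disjoint f @: L1 & f @: L2].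
Proof.
rewrite -!setI_eq0 => /eqP e; apply/eqP/setP => x; rewrite !inE.
apply/negP => /andP[/imsetP[a a1 ->]] /imsetP [b b2 /f_inj eab]; subst b.
have : a \in L1 :&: L2 by rewrite inE a1 b2.
by rewrite e inE.
Qed.

End Emb.

Section Part.
Variable n : nat.
Implicit Types (s t : seq {set 'I_n}).

Lemma cover_seq t : cover [set:: t] = \bigcup_(I <- t) I.
Proof.
apply/setP => x; apply/bigcupP/idP => [[B HB xB] | h].
  by rewrite in_bigcup_seq; apply/hasP; exists B => //; move: HB; rewrite inE.
by move: h; rewrite in_bigcup_seq => /hasP[B HB xB]; exists B; rewrite ?inE.
Qed.

Lemma ordpart_partition s : ordpart s -> partition [set:: s] setT.
Proof.
case/opP => H1 H2 H3; apply/and3P; split.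
- by rewrite cover_seq H3.
- apply/trivIsetP => A B; rewrite !inE => HA HB AB.
  have iA := index_mem A s; have iB := index_mem B s.
  rewrite HA in iA; rewrite HB in iB.
  case: (ltngtP (index A s) (index B s)) => h.
  + by move/pairwiseP: H2 => /(_ set0 _ _ iA iB h); rewrite !nth_index.
  + by move/pairwiseP: H2 => /(_ set0 _ _ iB iA h); rewrite !nth_index // disjoint_sym.
  + by move: AB; rewrite -(nth_index set0 HA) h nth_index // eqxx.
- by rewrite inE; apply/negP => /H1; rewrite eqxx.
Qed.

Lemma partition_ordpart t : uniq t -> partition [set:: t] setT -> ordpart t.
Proof.
move=> Ut /and3P[/eqP Hc /trivIsetP Ht H0].
apply/andP; split; first apply/andP; first split.
- apply/allP => I HI; apply: contraNneq H0 => <-; by rewrite inE.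
- apply/(pairwiseP set0) => i j; rewrite !inE => hi hj ij.
  apply: Ht; rewrite ?inE ?mem_nth //.
  by rewrite nth_uniq // neq_ltn ij.
- by rewrite -cover_seq Hc.
Qed.

Lemma enum_ordpart (P : {set {set 'I_n}}) : partition P setT -> ordpart (enum P).
Proof.
move=> h; apply: partition_ordpart; first exact: enum_uniq.
by have -> : [set:: enum P] = P by apply/setP => x; rewrite inE mem_enum.
Qed.

Lemma imset_seq (k : nat) (f : {set 'I_n} -> {set 'I_k}) t :
  f @: [set:: t] = [set:: map f t].
Proof.
apply/setP => x; rewrite inE; apply/imsetP/mapP => [[y] | [y]]; rewrite ?inE => Hy ->.
  by exists y.
by exists y; rewrite ?inE.
Qed.

Lemma set_seq_cat t1 t2 : [set:: t1 ++ t2] = [set:: t1] :|: [set:: t2].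
Proof. by apply/setP => x; rewrite !inE mem_cat. Qed.

Definition mkOP s (h : (size s < n.+1)%N) : OP n :=
  existT (fun k : 'I_n.+1 => k.-tuple {set 'I_n}) (Ordinal h) (in_tuple s).

Lemma blocks_mkOP s h : blocks (@mkOP s h) = s.
Proof. by []. Qed.

Lemma P'S_mk (J : {set 'I_n}) s : ordpart' J s -> [set:: s] \in P'S J.
Proof.
move=> h; have hs : (size s < n.+1)%N by rewrite ltnS; apply: op_size; case/andP: h.
apply/imsetP; exists (mkOP hs) => //; by rewrite inE blocks_mkOP.
Qed.

Lemma P'S_inv (J : {set 'I_n}) P : P \in P'S J -> exists2 s, ordpart' J s & P = [set:: s].
Proof. by case/imsetP => Q; rewrite inE => HQ ->; exists (blocks Q). Qed.

End Part.

Section SB.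
Local Open Scope ring_scope.
Lemma sign_block (N m m' : nat) (E : N = (m + m')%N) (t : {perm 'I_N})
    (p1 : {perm 'I_m}) (p2 : {perm 'I_m'}) :
  (forall (k : 'I_m) (x : 'I_N), val x = val k -> val (t x) = val (p1 k)) ->
  (forall (c : 'I_m') (x : 'I_N), val x = (m + c)%N -> val (t x) = (m + p2 c)%N) ->
  ((-1) ^+ odd_perm t = (-1) ^+ odd_perm p1 * (-1) ^+ odd_perm p2 :> int)%R.
Proof.
subst N => h1 h2.
have e1 k : t (lshift m' k) = lshift m' (p1 k) by apply: val_inj; rewrite /= (h1 k).
have e2 c : t (rshift m c) = rshift m (p2 c) by apply: val_inj; rewrite /= (h2 c).
rewrite -!det_perm -(det_ublock _ 0); congr (\det _).
apply/matrixP => i j; rewrite -(splitK i) -(splitK j).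
case: (split i) => i'; case: (split j) => j' /=.
- by rewrite block_mxEul !perm_mxEsub !mxE e1 eq_lshift.
- by rewrite block_mxEur !perm_mxEsub !mxE e1 eq_lrshift.
- by rewrite block_mxEdl !perm_mxEsub !mxE e2 eq_rlshift.
- by rewrite block_mxEdr !perm_mxEsub !mxE e2 eq_rshift.
Qed.
End SB.

Section Pos.
Variable n : nat.
Implicit Types (s t : seq {set 'I_n}).

Definition Ssum s i := (\sum_(I <- take i s) #|I|)%N.

Lemma Ssum_mono s i j : (i <= j)%N -> (Ssum s i <= Ssum s j)%N.
Proof.
move=> ij; rewrite /Ssum -(take_takel s ij) -{2}(cat_take_drop i (take j s)) big_cat /=.
exact: leq_addr.
Qed.

Lemma Ssum_all s i : ordpart s -> (Ssum s i <= n)%N.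
Proof.
case/opP => _ H2 H3.
have := card_bigcup_seq H2; rewrite H3 cardsT card_ord => e.
rewrite e /Ssum -{2}(cat_take_drop i s) big_cat /=; exact: leq_addr.
Qed.

Lemma Ssum_S s i : (i < size s)%N -> Ssum s i.+1 = (Ssum s i + #|nth set0 s i|)%N.
Proof. by move=> h; rewrite /Ssum (take_nth set0 h) -cats1 big_cat /= big_seq1. Qed.

Definition rank (I : {set 'I_n}) (x : 'I_n) := #|[set y in I | (y < x)%N]|.

Lemma rank_lt (I : {set 'I_n}) x : x \in I -> (rank I x < #|I|)%N.
Proof.
move=> xI; rewrite /rank (cardsD1 x I) xI add1n ltnS; apply: subset_leq_card.
apply/subsetP => y; rewrite !inE => /andP[yI yx]; rewrite yI andbT.
by apply/eqP => e; move: yx; rewrite e ltnn.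
Qed.

Lemma rank_mono (I : {set 'I_n}) (x y : 'I_n) : x \in I -> (x < y)%N -> (rank I x < rank I y)%N.
Proof.
move=> xI xy; rewrite /rank; apply: proper_card; rewrite properE; apply/andP; split.
  by apply/subsetP => z; rewrite !inE => /andP[-> zx]; apply: ltn_trans zx xy.
by apply/subsetPn; exists x; rewrite !inE ?xI ?xy ?ltnn.
Qed.

Lemma posPE s x : posP s x = (Ssum s (blk_of s x) + rank (nth set0 s (blk_of s x)) x)%N.
Proof. by []. Qed.

Lemma posP_lt s x : ordpart s -> (posP s x < n)%N.
Proof.
move=> Hs; have [hb hx] := op_blk x Hs.
rewrite posPE; apply: (@leq_trans (Ssum s (blk_of s x).+1)); last exact: Ssum_all.
by rewrite Ssum_S // ltn_add2l rank_lt.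
Qed.

Lemma posP_inj s : ordpart s -> injective (posP s).
Proof.
move=> Hs.
have key x y : (blk_of s x < blk_of s y)%N -> (posP s x < posP s y)%N.
  move=> h; have [hb hx] := op_blk x Hs.
  rewrite !posPE; apply: (@leq_trans (Ssum s (blk_of s x).+1)).
    by rewrite Ssum_S // ltn_add2l rank_lt.
  by apply: leq_trans (leq_addr _ _); apply: Ssum_mono.
move=> x y e; case: (ltngtP (blk_of s x) (blk_of s y)) => hb.
- by have := key _ _ hb; rewrite e ltnn.
- by have := key _ _ hb; rewrite e ltnn.
have [_ hx] := op_blk x Hs; have [_ hy] := op_blk y Hs.
move: e; rewrite !posPE hb => /addnI e.
apply: val_inj; case: (ltngtP (val x) (val y)) => // h.
  by have := rank_mono hx h; rewrite hb e ltnn.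
by rewrite -hb in hy; have := rank_mono hy h; rewrite hb e ltnn.
Qed.

Lemma sigmaP_val s x : ordpart s -> val (sigmaP s x) = posP s x.
Proof.
move=> Hs; rewrite /sigmaP; case: injectiveP => [inj | ninj].
  by rewrite permE /sigmaP_fun val_insubd posP_lt.
exfalso; apply: ninj => a b /(congr1 val); rewrite /sigmaP_fun !val_insubd !posP_lt //.
exact: posP_inj.
Qed.

End Pos.

Lemma bigcup_map_preim n k (f : 'I_k -> 'I_n) (t : seq {set 'I_n}) :
  \bigcup_(I <- map (fun I : {set 'I_n} => f @^-1: I) t) (I : {set 'I_k}) =
  f @^-1: \bigcup_(I <- t) (I : {set 'I_n}).
Proof.
by rewrite (big_morph (fun A : {set 'I_n} => f @^-1: A) (@preimsetU _ _ f) (preimset0 f)) big_map.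
Qed.

Lemma bigcup_map_imset n k (f : 'I_k -> 'I_n) (t : seq {set 'I_k}) :
  \bigcup_(I <- map (fun I : {set 'I_k} => f @: I) t) (I : {set 'I_n}) =
  f @: \bigcup_(I <- t) (I : {set 'I_k}).
Proof.
by rewrite (big_morph (fun A : {set 'I_k} => f @: A) (@imsetU _ _ f) (imset0 f)) big_map.
Qed.

Lemma U_mono n (s : seq {set 'I_n}) i j : (i <= j)%N -> U s i \subset U s j.
Proof.
move=> ij; apply/subsetP => x; rewrite /U !in_bigcup_seq => /hasP[I Ii xI].
apply/hasP; exists I => //; move: Ii; rewrite -(take_takel _ ij); exact: mem_take.
Qed.

Lemma U_cat n (s t : seq {set 'I_n}) i :
  U (s ++ t) (size s + i) = \bigcup_(I <- s) I :|: U t i.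
Proof. by rewrite /U takeD take_size_cat // drop_size_cat // big_cat. Qed.

Lemma U_catl n (s t : seq {set 'I_n}) i : (i <= size s)%N -> U (s ++ t) i = U s i.
Proof. by move=> h; rewrite /U takel_cat. Qed.

Lemma U_size n (s : seq {set 'I_n}) i : (size s <= i)%N -> U s i = \bigcup_(I <- s) I.
Proof. by move=> h; rewrite /U take_oversize. Qed.

Lemma U_map_preim n k (f : 'I_k -> 'I_n) (t : seq {set 'I_n}) i :
  U (map (fun I : {set 'I_n} => f @^-1: I) t) i = f @^-1: U t i.
Proof. by rewrite /U -map_take bigcup_map_preim. Qed.

Lemma U_map_imset n k (f : 'I_k -> 'I_n) (t : seq {set 'I_k}) i :
  U (map (fun I : {set 'I_k} => f @: I) t) i = f @: U t i.
Proof. by rewrite /U -map_take bigcup_map_imset. Qed.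

Section Decomp.
Variables (n m m' : nat) (J : {set 'I_n}) (iJ : 'I_m -> 'I_n) (jK : 'I_m' -> 'I_n).
Hypothesis iJincr : forall r s : 'I_m, (r < s)%N -> (iJ r < iJ s)%N.
Hypothesis jKincr : forall r s : 'I_m', (r < s)%N -> (jK r < jK s)%N.
Hypothesis HJi : J = iJ @: setT.
Hypothesis HKj : ~: J = jK @: setT.
Hypothesis Jne : J != set0.

Implicit Types (s t : seq {set 'I_n}).

Lemma iJ_in r : iJ r \in J. Proof. by rewrite HJi imset_f. Qed.
Lemma jK_notin r : jK r \notin J.
Proof. have : jK r \in ~: J by rewrite HKj imset_f.
by rewrite inE. Qed.

Lemma cut_spec s r : ordpart s -> (r <= size s)%N -> U s r = J -> cutJ J s = r.
Proof.
move=> Hs rs UJ.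
have hh : has (fun r => \bigcup_(I <- take r s) (I : {set 'I_n}) == J) (iota 0 (size s).+1).
  by apply/hasP; exists r; [rewrite mem_iota | rewrite -/(U s r) UJ].
have hf := nth_find 0 hh.
have cs : (cutJ J s <= size s)%N.
  by rewrite -ltnS /cutJ -[X in (_ < X)%N](size_iota 0 (size s).+1) -has_find.
move: hf; rewrite -/(cutJ J s) nth_iota ?ltnS // add0n /= -/(U s _) => /eqP e.
case: (ltngtP (cutJ J s) r) => // h.
  by have := U_neq Hs h rs; rewrite e UJ eqxx.
by have := U_neq Hs h cs; rewrite e UJ eqxx.
Qed.

Lemma ordpart'_cut s : ordpart' J s ->
  [/\ ordpart s, (0 < cutJ J s)%N, (cutJ J s <= size s)%N & U s (cutJ J s) = J].
Proof.
case/andP => Hs /hasP [r]; rewrite mem_iota add1n ltnS => /andP[r1 rs] /eqP UJ.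
by rewrite (cut_spec Hs rs UJ).
Qed.

Lemma split_blocks s r : ordpart s -> U s r = J ->
  (forall I, I \in take r s -> I \subset J) /\ (forall I, I \in drop r s -> I \subset ~: J).
Proof.
case/opP => _ H2 _ UJ; split => I HI.
  apply/subsetP => x xI; rewrite -UJ /U in_bigcup_seq; apply/hasP; by exists I.
move: H2; rewrite -(cat_take_drop r s) pairwise_cat => /and3P[/allrelP H _ _].
have : [disjoint I & J].
  rewrite -UJ /U; apply: disj_bigcup; apply/allP => I' HI'.
  by rewrite disjoint_sym; apply: H.
by rewrite disjoint_subset => /subsetP h; apply/subsetP => x /h; rewrite !inE.
Qed.

Definition glue (s1 : seq {set 'I_m}) (s2 : seq {set 'I_m'}) : seq {set 'I_n} :=
  map (fun L : {set 'I_m} => iJ @: L) s1 ++ map (fun L : {set 'I_m'} => jK @: L) s2.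

Lemma reconstruct s : ordpart' J s ->
  s = glue (phi_ord J iJ jK s).1 (phi_ord J iJ jK s).2.
Proof.
case/ordpart'_cut => Hs _ _ UJ.
have [hA hB] := split_blocks Hs UJ.
rewrite /glue /phi_ord /= -!map_comp.
rewrite -{1}(cat_take_drop (cutJ J s) s); congr (_ ++ _); apply/esym/map_id_in => I HI /=.
  by apply: imset_preim => //; rewrite -HJi; apply: hA.
by apply: imset_preim => //; rewrite -HKj; apply: hB.
Qed.

Lemma glue_ordpart (s1 : seq {set 'I_m}) (s2 : seq {set 'I_m'}) : ordpart s1 -> ordpart s2 -> ordpart (glue s1 s2).
Proof.
case/opP => A1 A2 A3; case/opP => B1 B2 B3.
apply/andP; split; first apply/andP; first split.
- rewrite all_cat !all_map; apply/andP; split; apply/allP => L HL /=.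
    by apply: imset_neq0; apply: A1.
  by apply: imset_neq0; apply: B1.
- rewrite pairwise_cat !pairwise_map; apply/and3P; split.
  + rewrite allrel_mapl allrel_mapr; apply/allrelP => L1 L2 _ _ /=.
    rewrite -setI_eq0; apply/eqP/setP => x; rewrite !inE.
    apply/negP => /andP[/imsetP[a _ ->] /imsetP[b _ e]].
    by have := iJ_in a; rewrite e (negbTE (jK_notin b)).
  + by apply: sub_pairwise A2 => L1 L2 /= h; apply: imset_disj.
  + by apply: sub_pairwise B2 => L1 L2 /= h; apply: imset_disj.
- rewrite /glue big_cat /= !bigcup_map_imset A3 B3 -HJi -HKj.
  by apply/eqP/setP => x; rewrite !inE orbN.
Qed.

Lemma s1_nonempty (s1 : seq {set 'I_m}) : ordpart s1 -> (0 < size s1)%N.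
Proof.
case/opP => _ _ H3; case: s1 H3 => //; rewrite big_nil => e.
move: Jne; rewrite HJi; case/set0Pn => x /imsetP[a _ _].
have : a \in (set0 : {set 'I_m}) by rewrite e inE.
by rewrite inE.
Qed.

Lemma glue_U (s1 : seq {set 'I_m}) (s2 : seq {set 'I_m'}) : ordpart s1 -> U (glue s1 s2) (size s1) = J.
Proof.
case/opP => _ _ H3.
by rewrite /glue U_catl ?size_map // U_size ?size_map // bigcup_map_imset H3 HJi.
Qed.

Lemma glue_ordpart' (s1 : seq {set 'I_m}) (s2 : seq {set 'I_m'}) : ordpart s1 -> ordpart s2 -> ordpart' J (glue s1 s2).
Proof.
move=> H1 H2; apply/andP; split; first exact: glue_ordpart.
apply/hasP; exists (size s1); last by rewrite -/(U _ _) glue_U.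
by rewrite mem_iota add1n ltnS s1_nonempty //= /glue size_cat size_map leq_addr.
Qed.

Lemma glue_phi (s1 : seq {set 'I_m}) (s2 : seq {set 'I_m'}) : ordpart s1 -> ordpart s2 ->
  phi_ord J iJ jK (glue s1 s2) = (s1, s2).
Proof.
move=> H1 H2; rewrite /phi_ord.
have -> : cutJ J (glue s1 s2) = size s1.
  apply: cut_spec; [exact: glue_ordpart | | exact: glue_U].
  by rewrite /glue size_cat size_map leq_addr.
rewrite /glue take_size_cat ?size_map // drop_size_cat ?size_map //.
rewrite -!map_comp; congr (_, _); apply: map_id_in => L _ /=; apply: preim_imset.
  exact: iJincr. exact: jKincr.
Qed.



Lemma phi_ordpart s : ordpart' J s ->
  ordpart (phi_ord J iJ jK s).1 /\ ordpart (phi_ord J iJ jK s).2.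
Proof.
move=> Hs'; have [Hs _ rs UJ] := ordpart'_cut Hs'.
have [hA hB] := split_blocks Hs UJ.
have [H1 H2 H3] := opP Hs.
rewrite /phi_ord /=; split; apply/andP; split; try apply/andP; try split.
- rewrite all_map; apply/allP => I HI /=; apply: preim_neq0; first by rewrite -HJi; apply: hA.
  by apply: H1; apply: mem_take HI.
- rewrite pairwise_map; apply: sub_pairwise (op_take _ H2) => I1 I2 /=; exact: preim_disj.
- rewrite bigcup_map_preim -/(U s _) UJ; apply/eqP/setP => a; by rewrite !inE iJ_in.
- rewrite all_map; apply/allP => I HI /=; apply: preim_neq0; first by rewrite -HKj; apply: hB.
  by apply: H1; apply: mem_drop HI.
- rewrite pairwise_map; apply: sub_pairwise (subseq_pairwise (drop_subseq _ _) H2) => I1 I2 /=.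
  exact: preim_disj.
- rewrite bigcup_map_preim; apply/eqP/setP => c; rewrite !inE.
  have : jK c \in \bigcup_(I <- s) (I : {set 'I_n}) by rewrite H3 inE.
  rewrite -{1}(cat_take_drop (cutJ J s) s) big_cat /= -/(U s _) UJ inE.
  by rewrite (negbTE (jK_notin c)).
Qed.

Variables (R : realFieldType) (lam : 'I_n -> R) (delta : R).
Hypothesis Hd : is_delta lam delta.
Hypothesis HJ : avg J lam = delta.
Hypothesis Hmin : forall J' : {set 'I_n}, avg J' lam = delta -> (#|J| <= #|J'|)%N.
Let mu := fun r : 'I_m => lam (iJ r).
Let nu := fun r : 'I_m' => lam (jK r).

Lemma phi_lam s : ordpart' J s -> ordpart_lam lam s ->
  ordpart_lam mu (phi_ord J iJ jK s).1 && ordpart_lam nu (phi_ord J iJ jK s).2.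
Proof.
move=> Hs' Hl; have [P1 P2] := phi_ordpart Hs'.
have [Hs r0 rs UJ] := ordpart'_cut Hs'.
have [hA hB] := split_blocks Hs UJ.
have [H1 H2 H3] := opP Hs.
move: Hl; rewrite !ordpart_lamE P1 P2 Hs /= => /allP Hl.
set r := cutJ J s in r0 rs UJ hA hB Hl *.
rewrite /phi_ord -/r /=; apply/andP; split; apply/allP => i; rewrite mem_iota size_map.
- rewrite size_takel // add1n ltnS => /andP[i1 ir].
  rewrite U_map_preim /U take_takel // -/(U s i) sJ_preim //; last first.
    by rewrite -HJi -UJ; apply: U_mono.
  by apply: Hl; rewrite mem_iota add1n ltnS i1 (leq_trans ir rs).
- rewrite add1n ltnS => /andP[i1 iB].
  have VJ : U (drop r s) i \subset ~: J.
    apply/subsetP => x; rewrite /U in_bigcup_seq => /hasP[I HI xI].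
    by move/subsetP: (hB I (mem_take HI)) => /(_ x xI).
  rewrite U_map_preim sJ_preim; last by rewrite -HKj.
  apply: (out_pos Hd HJ Hmin VJ).
    have : nth set0 (drop r s) 0 \in take i (drop r s).
      by rewrite -(nth_take set0 i1); apply: mem_nth; rewrite size_takel.
    move=> h0; have : nth set0 (drop r s) 0 != set0.
      by apply: H1; apply: (mem_drop (n0:=r)); apply: mem_nth; apply: leq_trans iB.
    case/set0Pn => x hx; apply/set0Pn; exists x; rewrite /U in_bigcup_seq.
    by apply/hasP; exists (nth set0 (drop r s) 0).
  have e : size (take r s) = r by rewrite size_takel.
  have := U_cat (take r s) (drop r s) i; rewrite cat_take_drop e -/(U s r) UJ => <-.
  apply: Hl; rewrite mem_iota add1n ltnS.
  have ss : size s = (r + size (drop r s))%N by rewrite -{1}(cat_take_drop r s) size_cat e.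
  rewrite ss leq_add2l iB andbT.
  by rewrite addn_gt0 r0.
exact: jKincr.
Qed.


Lemma sub_both (I : {set 'I_n}) : I \subset J -> I \subset ~: J -> I = set0.
Proof.
move=> h1 h2; apply/setP => x; rewrite inE; apply/negP => xI.
by move/subsetP: h2 => /(_ x xI); rewrite inE (subsetP h1 x xI).
Qed.

Lemma phiP_eq s : ordpart' J s ->
  phi J iJ jK [set:: s] = ([set:: (phi_ord J iJ jK s).1], [set:: (phi_ord J iJ jK s).2]).
Proof.
move=> Hs'; have [Hs _ _ UJ] := ordpart'_cut Hs'.
have [hA hB] := split_blocks Hs UJ.
have [H1 _ _] := opP Hs.
have e1 : [set I in [set:: s] | I \subset J] = [set:: take (cutJ J s) s].
  apply/setP => I; rewrite !inE -{1}(cat_take_drop (cutJ J s) s) mem_cat.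
  apply/andP/idP => [[/orP[//|h] h']|h]; last by rewrite h hA.
  have h0 := sub_both h' (hB _ h).
  by move: (H1 I (mem_drop h)); rewrite h0 eqxx.
have e2 : [set I in [set:: s] | I \subset ~: J] = [set:: drop (cutJ J s) s].
  apply/setP => I; rewrite !inE -{1}(cat_take_drop (cutJ J s) s) mem_cat.
  apply/andP/idP => [[/orP[h|//] h']|h]; last by rewrite h hB ?orbT.
  have h0 := sub_both (hA _ h) h'.
  by move: (H1 I (mem_take h)); rewrite h0 eqxx.
by rewrite /phi e1 e2 !imset_seq.
Qed.

Definition Gl (X : {set {set 'I_m}} * {set {set 'I_m'}}) : {set {set 'I_n}} :=
  (fun L : {set 'I_m} => iJ @: L) @: X.1 :|: (fun L : {set 'I_m'} => jK @: L) @: X.2.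

Lemma Gl_glue (s1 : seq {set 'I_m}) (s2 : seq {set 'I_m'}) :
  Gl ([set:: s1], [set:: s2]) = [set:: glue s1 s2].
Proof. by rewrite /Gl /glue set_seq_cat !imset_seq. Qed.

Lemma Gl_phi P : P \in P'S J -> Gl (phi J iJ jK P) = P.
Proof.
case/P'S_inv => s Hs ->.
by rewrite phiP_eq // Gl_glue -reconstruct.
Qed.

Lemma phi_inj : {in P'S J &, injective (phi J iJ jK)}.
Proof. by move=> P Q HP HQ e; rewrite -(Gl_phi HP) -(Gl_phi HQ) e. Qed.


Lemma set_enum' k (P : {set {set 'I_k}}) : [set:: enum P] = P.
Proof. by apply/setP => x; rewrite inE mem_enum. Qed.

Lemma phi_PS P : P \in P'S J :&: PS lam ->
  ((phi J iJ jK P).1 \in PS mu) && ((phi J iJ jK P).2 \in PS nu).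
Proof.
case/setIP => HP; case/P'S_inv: HP => s Hs -> HL.
move: HL; rewrite inE => /andP[_ /forallP HL].
rewrite phiP_eq //; have [P1 P2] := phi_ordpart Hs.
have [Ho _ _ UJ] := ordpart'_cut Hs.
have [hA hB] := split_blocks Ho UJ.
rewrite !inE /part_lam !ordpart_partition //=; apply/andP; split; apply/forallP => I';
  apply/implyP; rewrite inE /phi_ord /= => /mapP [I HI ->].
- rewrite sJ_preim; last by rewrite -HJi; apply: hA.
    by have := HL I; rewrite inE (mem_take HI).
  exact: iJincr.
- rewrite sJ_preim; last by rewrite -HKj; apply: hB.
    by have := HL I; rewrite inE (mem_drop HI).
  exact: jKincr.
Qed.

Lemma phi_surj (P1 : {set {set 'I_m}}) (P2 : {set {set 'I_m'}}) :
  P1 \in PS mu -> P2 \in PS nu ->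
  exists2 P, P \in P'S J :&: PS lam & phi J iJ jK P = (P1, P2).
Proof.
rewrite !inE => /andP[pa1 /forallP h1] /andP[pa2 /forallP h2].
have o1 := enum_ordpart pa1; have o2 := enum_ordpart pa2.
exists [set:: glue (enum P1) (enum P2)].
  rewrite inE P'S_mk ?glue_ordpart' //= inE /part_lam ordpart_partition ?glue_ordpart //=.
  apply/forallP => I; apply/implyP; rewrite inE mem_cat => /orP[] /mapP [L HL ->].
    rewrite sJ_imset; last exact: iJincr.
    by have := h1 L; rewrite mem_enum in HL; rewrite HL.
  rewrite sJ_imset; last exact: jKincr.
  by have := h2 L; rewrite mem_enum in HL; rewrite HL.
by rewrite phiP_eq ?glue_ordpart' // glue_phi // !set_enum'.
Qed.


Lemma card_J : #|J| = m.
Proof. rewrite HJi card_imset; last exact: (f_inj iJincr). by rewrite cardsT card_ord. Qed.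

Lemma posP_J s a : ordpart' J s -> posP s (iJ a) = posP (phi_ord J iJ jK s).1 a.
Proof.
move=> Hs'; have [Ho r0 rs UJ] := ordpart'_cut Hs'; have [hA hB] := split_blocks Ho UJ.
rewrite /phi_ord /=.
move: r0 rs UJ hA hB; set r := cutJ J s => r0 rs UJ hA hB.
have sA : size (take r s) = r by rewrite size_takel.
have hasA : has (fun I : {set 'I_n} => iJ a \in I) (take r s).
  by move: (iJ_in a); rewrite -UJ /U in_bigcup_seq.
have hb : (blk_of s (iJ a) < r)%N.
  by rewrite -sA /blk_of -{1}(cat_take_drop r s) find_cat hasA -has_find.
have bl : blk_of s (iJ a) = blk_of (map (fun I : {set 'I_n} => iJ @^-1: I) (take r s)) a.
  rewrite /blk_of find_map -{1}(cat_take_drop r s) find_cat hasA.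
  by apply: eq_find => I; rewrite /preim /= inE.
rewrite !posPE -bl; move: hb; set b := blk_of s (iJ a) => hb.
congr addn.
  rewrite /Ssum -map_take big_map -(take_takel s (ltnW hb)).
  apply: eq_big_seq => I HI; rewrite (card_preim iJincr) //.
  by rewrite -HJi; apply: hA; apply: mem_take HI.
rewrite -(nth_take set0 hb) (nth_map set0) ?sA // /rank (rank_preim iJincr) //.
by rewrite -HJi; apply: hA; apply: mem_nth; rewrite sA.
Qed.

Lemma posP_K s c : ordpart' J s -> posP s (jK c) = (m + posP (phi_ord J iJ jK s).2 c)%N.
Proof.
move=> Hs'; have [Ho r0 rs UJ] := ordpart'_cut Hs'; have [hA hB] := split_blocks Ho UJ.
have [_ Ho2] := phi_ordpart Hs'.
rewrite /phi_ord /= in Ho2 *.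
move: r0 rs UJ hA hB Ho2; set r := cutJ J s => r0 rs UJ hA hB Ho2.
have sA : size (take r s) = r by rewrite size_takel.
have hasA : ~~ has (fun I : {set 'I_n} => jK c \in I) (take r s).
  apply/hasP => [[I HI h]]; move/subsetP: (hA I HI) => /(_ _ h).
  by rewrite (negbTE (jK_notin c)).
have [hb _] := op_blk c Ho2; rewrite size_map in hb.
have bl : blk_of s (jK c) = (r + blk_of (map (fun I : {set 'I_n} => jK @^-1: I) (drop r s)) c)%N.
  rewrite /blk_of find_map -{1}(cat_take_drop r s) find_cat (negbTE hasA) sA.
  by congr addn; apply: eq_find => I; rewrite /preim /= inE.
rewrite !posPE bl; move: hb; set b := blk_of _ c => hb.
rewrite addnA; congr addn.
  rewrite /Ssum takeD big_cat /=; congr addn.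
    by rewrite -card_bigcup_seq ?op_take //; [rewrite -/(U s r) UJ card_J | case/opP: Ho].
  rewrite -map_take big_map; apply: eq_big_seq => I HI; rewrite (card_preim jKincr) //.
  by rewrite -HKj; apply: hB; apply: mem_take HI.
rewrite -nth_drop (nth_map set0) // /rank (rank_preim jKincr) //.
by rewrite -HKj; apply: hB; apply: mem_nth.
Qed.

Local Open Scope ring_scope.

Let lam' := fun i : 'I_n => if i \in J then lam i - delta else lam i.

Lemma ii_a s : ordpart_lam lam' s -> ordpart_lam lam s && ~~ ordpart' J s.
Proof.
rewrite !ordpart_lamE => /andP[Ho /allP Hl]; rewrite Ho /=; apply/andP; split.
  apply/allP => i Hi; have := Hl i Hi.
  case: (eqVneq (U s i) J) => [e | ne]; first by rewrite e (sJ_lam'_J Hd HJ) ltxx.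
  by rewrite (key_i Hd Hmin ne).
rewrite /ordpart' Ho /=; apply/negP => /hasP [i Hi /eqP e]; have := Hl i Hi.
by rewrite /U e (sJ_lam'_J Hd HJ) ltxx.
Qed.

Lemma ii_b s : ordpart_lam lam s -> ~~ ordpart' J s -> ordpart_lam lam' s.
Proof.
rewrite !ordpart_lamE => /andP[Ho /allP Hl] hn; rewrite Ho /=.
apply/allP => i Hi.
have ne : U s i != J.
  apply: contra hn => /eqP e; rewrite /ordpart' Ho; apply/hasP; exists i => //.
  by rewrite -/(U s i) e.
by rewrite (key_i Hd Hmin ne); apply: Hl.
Qed.

Lemma pos_sum (t : seq {set 'I_n}) (F : {set 'I_n} -> R) :
  (forall I, I \in t -> 0 < F I) -> t != [::] -> 0 < \sum_(I <- t) F I.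
Proof.
case: t => // a t h _; rewrite big_cons; apply: ltr_wpDr.
  rewrite big_seq; apply: sumr_ge0 => I HI; apply: ltW; apply: h.
  by rewrite inE HI orbT.
by apply: h; rewrite inE eqxx.
Qed.

Lemma ii_c P : part_lam lam' P -> part_lam lam P && (P \notin P'S J).
Proof.
rewrite /part_lam => /andP[Hp /forallP Hl]; rewrite Hp /=; apply/andP; split.
  apply/forallP => I; apply/implyP => HI; have := implyP (Hl I) HI.
  case: (eqVneq I J) => [-> | ne]; first by rewrite (sJ_lam'_J Hd HJ) ltxx.
  by rewrite (key_i Hd Hmin ne).
apply/negP => /P'S_inv [s Hs e]; subst P.
have [Ho r0 rs UJ] := ordpart'_cut Hs.
have [_ H2 _] := opP Ho.
have := prefix_sum lam' (cutJ J s) H2; rewrite UJ (sJ_lam'_J Hd HJ) => e.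
have : 0 < \sum_(I <- take (cutJ J s) s) sJ I lam'.
  apply: pos_sum.
    move=> I HI; have := implyP (Hl I); rewrite inE (mem_take HI); by apply.
  by rewrite -size_eq0 size_takel // -lt0n.
by rewrite e ltxx.
Qed.

Lemma ii_d P : part_lam lam P -> P \notin P'S J -> part_lam lam' P.
Proof.
rewrite /part_lam => /andP[Hp /forallP Hl] hn; rewrite Hp /=.
case: (boolP (J \in P)) => JP.
  exfalso; move/negP: hn; apply.
  have eP : [set:: J :: enum (P :\ J)] = P by rewrite set_cons set_enum' setD1K.
  have uQ : uniq (J :: enum (P :\ J)) by rewrite /= mem_enum !inE eqxx enum_uniq.
  have oQ : ordpart (J :: enum (P :\ J)) by apply: partition_ordpart; rewrite ?eP.
  rewrite -eP; apply: P'S_mk; rewrite /ordpart' oQ; apply/hasP; exists 1%N.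
    by rewrite mem_iota.
  by rewrite /= ?take0 big_cons big_nil setU0.
apply/forallP => I; apply/implyP => HI.
have ne : I != J by apply: contraNneq JP => <-.
by rewrite (key_i Hd Hmin ne); apply: (implyP (Hl I)).
Qed.

Hypothesis Hpos : 0 < \sum_(i < n) lam i.

Lemma sJT : sJ setT lam = \sum_(i < n) lam i.
Proof. by rewrite /sJ; apply: eq_bigl => i; rewrite inE. Qed.

Lemma witness : exists w : seq {set 'I_n},
  [/\ ordpart' J w, ordpart_lam lam w & forall I, I \in w -> 0 < sJ I lam].
Proof.
have Jp := sJ_J_pos Hd HJ.
case: (boolP (~: J == set0)) => e.
  have JT : J = setT by rewrite -(setCK J) (eqP e) setC0.
  have o : ordpart [:: J].
    by rewrite /ordpart /= Jne big_cons big_nil setU0 JT eqxx.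
  exists [:: J]; split.
  - rewrite /ordpart' o; apply/hasP; exists 1%N => //.
    by rewrite /= ?take0 big_cons big_nil setU0.
  - rewrite ordpart_lamE o /= andbT /U /= ?take0 big_cons big_nil setU0 //.
  - by move=> I; rewrite inE => /eqP ->.
have dj : [disjoint J & ~: J] by rewrite -setI_eq0 setICr.
have o : ordpart [:: J; ~: J].
  by rewrite /ordpart /= Jne e dj !big_cons big_nil setU0 setUCr eqxx.
exists [:: J; ~: J]; split.
- rewrite /ordpart' o; apply/hasP; exists 1%N => //.
  by rewrite /= ?take0 big_cons big_nil setU0.
- rewrite ordpart_lamE o /= /U /= ?take0 !big_cons big_nil !setU0 setUCr Jp sJT Hpos //.
- move=> I; rewrite !inE => /orP[] /eqP -> //.
  apply: (out_pos Hd HJ Hmin) => //.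
  by rewrite setUCr sJT.
Qed.


Lemma iii_lem s (sigma : {perm 'I_n}) (E : n = (m + m')%N) : ordpart' J s ->
  (forall r : 'I_m, (sigma (iJ r) : nat) = r) ->
  (forall r : 'I_m', (sigma (jK r) : nat) = (m + r)%N) ->
  eps s = (-1) ^+ odd_perm sigma * eps (phi_ord J iJ jK s).1 * eps (phi_ord J iJ jK s).2 /\
  eps' s = eps' (phi_ord J iJ jK s).1 * eps' (phi_ord J iJ jK s).2.
Proof.
move=> Hs' hs1 hs2.
have [Ho r0 rs UJ] := ordpart'_cut Hs'; have [hA hB] := split_blocks Ho UJ.
have [O1 O2] := phi_ordpart Hs'.
split.
  rewrite /eps -(mulKVg sigma (sigmaP s)) odd_permM signr_addb -mulrA; congr (_ * _).
  apply: (sign_block E).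
    move=> k x hx; have ex : x = sigma (iJ k) by apply: val_inj; rewrite /= hs1.
    by rewrite permM ex permK !sigmaP_val // posP_J.
  move=> c x hx; have ex : x = sigma (jK c) by apply: val_inj; rewrite /= hs2.
  by rewrite permM ex permK !sigmaP_val // posP_K.
rewrite /eps' -exprD; congr (_ ^+ _).
rewrite /phi_ord /= !big_map.
rewrite -{1}(cat_take_drop (cutJ J s) s) big_cat /=; congr addn.
  apply: eq_big_seq => I HI; rewrite (card_preim iJincr) // -HJi; exact: hA.
apply: eq_big_seq => I HI; rewrite (card_preim jKincr) // -HKj; exact: hB.
Qed.


Lemma glue_lam (s1 : seq {set 'I_m}) (s2 : seq {set 'I_m'}) :
  ordpart_lam mu s1 -> ordpart_lam nu s2 -> ordpart_lam lam (glue s1 s2).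
Proof.
rewrite !ordpart_lamE => /andP[o1 /allP h1] /andP[o2 /allP h2].
rewrite glue_ordpart //=; apply/allP => i.
rewrite mem_iota add1n ltnS /glue size_cat !size_map => /andP[i1 i2].
case: (leqP i (size s1)) => hi.
  rewrite U_catl ?size_map // U_map_imset sJ_imset; last exact: iJincr.
  by apply: h1; rewrite mem_iota add1n ltnS i1.
have -> : i = (size (map (fun L : {set 'I_m} => iJ @: L) s1) + (i - size s1))%N.
  by rewrite size_map subnKC // ltnW.
rewrite U_cat bigcup_map_imset.
have [_ _ ->] := opP o1; rewrite -HJi U_map_imset sJ_split.
  apply: addr_gt0; first exact: (sJ_J_pos Hd HJ).
  rewrite sJ_imset; last exact: jKincr.
  by apply: h2; rewrite mem_iota add1n ltnS subn_gt0 hi leq_subLR.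
rewrite disjoint_sym disjoint_subset; apply/subsetP => x /imsetP[c _ ->].
by rewrite inE jK_notin.
Qed.

End Decomp.

Unset Implicit Arguments.
Local Open Scope ring_scope.

Theorem mainTheorem14 (R : realFieldType) (n : nat) (lam : 'I_n -> R)
    (delta : R) (J : {set 'I_n}) (m : nat)
    (iJ : 'I_m -> 'I_n) (jK : 'I_(n - m) -> 'I_n) (sigma : {perm 'I_n}) :
  0 < \sum_(i < n) lam i ->
  is_delta lam delta ->
  avg J lam = delta ->
  (forall J' : {set 'I_n}, avg J' lam = delta -> (#|J| <= #|J'|)%N) ->
  #|J| = m ->
  (forall r s : 'I_m, (r < s)%N -> (iJ r < iJ s)%N) ->
  J = [set iJ r | r : 'I_m] ->
  (forall r s : 'I_(n - m), (r < s)%N -> (jK r < jK s)%N) ->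
  ~: J = [set jK r | r : 'I_(n - m)] ->
  (forall r : 'I_m, (sigma (iJ r) : nat) = r) ->
  (forall r : 'I_(n - m), (sigma (jK r) : nat) = (m + r)%N) ->
  let lam' := fun i : 'I_n => if i \in J then lam i - delta else lam i in
  let mu := fun r : 'I_m => lam (iJ r) in
  let nu := fun r : 'I_(n - m) => lam (jK r) in
  let eps0 : int := (-1) ^+ odd_perm sigma in
  (* (i) *)
  (forall K : {set 'I_n}, K != J -> (0 < sJ K lam') = (0 < sJ K lam)) /\
  (* (ii) *)
  (PordS lam = PordS lam' :|: (Pord'S J :&: PordS lam) /\
   [disjoint PordS lam' & Pord'S J :&: PordS lam] /\
   PS lam = PS lam' :|: (P'S J :&: PS lam) /\
   [disjoint PS lam' & P'S J :&: PS lam] /\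
   (#|PordS lam'| < #|PordS lam|)%N /\
   (#|PS lam'| < #|PS lam|)%N) /\
  (* (iii) *)
  (forall s : seq {set 'I_n}, ordpart' J s ->
     eps s = eps0 * eps (phi_ord J iJ jK s).1 * eps (phi_ord J iJ jK s).2 /\
     eps' s = eps' (phi_ord J iJ jK s).1 * eps' (phi_ord J iJ jK s).2) /\
  (* (iv), ordered *)
  ((forall s : seq {set 'I_n}, ordpart' J s -> ordpart_lam lam s ->
      ordpart_lam mu (phi_ord J iJ jK s).1 && ordpart_lam nu (phi_ord J iJ jK s).2) /\
   (forall s t : seq {set 'I_n}, ordpart' J s -> ordpart_lam lam s ->
      ordpart' J t -> ordpart_lam lam t ->
      phi_ord J iJ jK s = phi_ord J iJ jK t -> s = t) /\
   (forall (s1 : seq {set 'I_m}) (s2 : seq {set 'I_(n - m)}),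
      ordpart_lam mu s1 -> ordpart_lam nu s2 ->
      exists s : seq {set 'I_n}, [/\ ordpart' J s, ordpart_lam lam s &
                                     phi_ord J iJ jK s = (s1, s2)])) /\
  (* (iv), unordered *)
  ((forall P, P \in P'S J :&: PS lam ->
      ((phi J iJ jK P).1 \in PS mu) && ((phi J iJ jK P).2 \in PS nu)) /\
   {in P'S J :&: PS lam &, injective (phi J iJ jK)} /\
   (forall (P1 : {set {set 'I_m}}) (P2 : {set {set 'I_(n - m)}}),
      P1 \in PS mu -> P2 \in PS nu ->
      exists2 P, P \in P'S J :&: PS lam & phi J iJ jK P = (P1, P2))).
Proof.
move=> Hpos Hd HJ Hmin Hm iJincr HJi jKincr HKj hs1 hs2 lam' mu nu eps0.
have HJi' : J = iJ @: setT.
  by rewrite HJi; apply/setP => x; apply/imsetP/imsetP => [[a _ ->]|[a _ ->]]; exists a.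
have HKj' : ~: J = jK @: setT.
  by rewrite HKj; apply/setP => x; apply/imsetP/imsetP => [[a _ ->]|[a _ ->]]; exists a.
have Jne : J != set0 by rewrite -card_gt0 (J_card Hd HJ).
have E : n = (m + (n - m))%N.
  by rewrite subnKC // -Hm -[X in (_ <= X)%N](card_ord n) max_card.
have [w [w1 w2 w3]] := witness Jne Hd HJ Hmin Hpos.
have ow : ordpart w by case/andP: w1.
have hw : (size w < n.+1)%N by rewrite ltnS op_size.
have eqO : PordS lam = PordS lam' :|: (Pord'S J :&: PordS lam).
  apply/setP => Q; rewrite !inE.
  case h : (ordpart_lam lam' (blocks Q)).
    by have /andP[-> _] := ii_a Hd HJ Hmin h.
  case hl : (ordpart_lam lam (blocks Q)); rewrite /= ?andbF ?andbT //.
  case ho : (ordpart' J (blocks Q)) => //.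
  by rewrite (ii_b Hd Hmin hl (negbT ho)) in h.
have djO : [disjoint PordS lam' & Pord'S J :&: PordS lam].
  rewrite -setI_eq0; apply/eqP/setP => Q; rewrite !inE.
  case h : (ordpart_lam lam' (blocks Q)) => //=.
  by have /andP[_ /negbTE ->] := ii_a Hd HJ Hmin h.
have eqP_ : PS lam = PS lam' :|: (P'S J :&: PS lam).
  apply/setP => P; rewrite !inE.
  case h : (part_lam lam' P).
    by have /andP[-> _] := ii_c Hd HJ Hmin h.
  case hl : (part_lam lam P); rewrite /= ?andbF ?andbT //.
  case ho : (P \in P'S J) => //.
  by rewrite (ii_d Hd Hmin hl (negbT ho)) in h.
have djP : [disjoint PS lam' & P'S J :&: PS lam].
  rewrite -setI_eq0; apply/eqP/setP => P; rewrite !inE.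
  case h : (part_lam lam' P) => //=.
  by have /andP[_ /negbTE ->] := ii_c Hd HJ Hmin h.
split; first by move=> K KJ; apply: (key_i Hd Hmin KJ).
split.
  do 4 (split => //).
  split.
    apply: proper_card; rewrite properE; apply/andP; split.
      by rewrite eqO subsetUl.
    apply/subsetPn; exists (mkOP hw); first by rewrite inE blocks_mkOP.
    rewrite inE blocks_mkOP; apply/negP => h.
    by have /andP[_ ] := ii_a Hd HJ Hmin h; rewrite w1.
  apply: proper_card; rewrite properE; apply/andP; split.
    by rewrite eqP_ subsetUl.
  apply/subsetPn; exists [set:: w].
    rewrite inE /part_lam ordpart_partition //=; apply/forallP => I.
    by apply/implyP; rewrite inE; apply: w3.
  rewrite inE; apply/negP => h.
  by have /andP[_ ] := ii_c Hd HJ Hmin h; rewrite P'S_mk.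
split.
  move=> s Hs; exact: (iii_lem iJincr jKincr HJi' HKj' E Hs hs1 hs2).
split.
  split; first by move=> s Hs Hl; apply: (phi_lam iJincr jKincr HJi' HKj' Hd HJ Hmin).
  split.
    move=> s t Hs _ Ht _ e.
    by rewrite (reconstruct HJi' HKj' Hs) (reconstruct HJi' HKj' Ht) e.
  move=> s1 s2 h1 h2; exists (glue iJ jK s1 s2).
  have o1 : ordpart s1 by case/andP: h1.
  have o2 : ordpart s2 by case/andP: h2.
  split.
  - exact: (glue_ordpart' iJincr jKincr HJi' HKj' Jne).
  - exact: (glue_lam iJincr jKincr HJi' HKj' Hd HJ).
  - exact: (glue_phi iJincr jKincr HJi' HKj').
split; first by move=> P HP; apply: (phi_PS iJincr jKincr HJi' HKj').
split.
  move=> P Q HP HQ; apply: (phi_inj HJi' HKj'); by move: HP HQ; rewrite !inE => /andP[] ? _ /andP[] ? _.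
move=> P1 P2 h1 h2; exact: (phi_surj iJincr jKincr HJi' HKj' Jne h1 h2).
Qed.
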